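(* For every function \(f \colon [0,\infty) \to [0,\infty)\) the following conditions are equivalent: (i) \(f\) is increasing (i.e. \(a \geq b\) implies \(f(a) \geq f(b)\) for all \(a,b \geq 0\)) and \(f(0)=0\); (ii) \(f\) is pseudoultrametric-preserving; (iii) \(f\) is ultrametric-pseudoultrametric-preserving.
   Context: A pseudoultrametric on a set \(X\) is a symmetric function \(d\colon X\times X\to[0,\infty)\) with \(d(x,x)=0\) for all \(x\in X\) and satisfying the strong triangle inequality \(d(x,y)\le \max\{d(x,z),d(z,y)\}\) for all \(x,y,z\in X\) (distinct points may have distance zero). An ultrametric is a pseudoultrametric with \(d(x,y)=0\) only if \(x=y\). A function \(f\colon[0,\infty)\to[0,\infty)\) is pseudoultrametric-preserving if \(f\circ d\) is a pseudoultrametric for every pseudoultrametric space \((X,d)\), and ultrametric-pseudoultrametric-preserving if \(f\circ d\) is a pseudoultrametric for every ultrametric space \((X,d)\). *)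

(* Defs.v *)
From Stdlib Require Import Reals.
Open Scope R_scope.

Definition is_pseudoultrametric {X : Type} (d : X -> X -> R) : Prop :=
  (forall x y, 0 <= d x y) /\
  (forall x, d x x = 0) /\
  (forall x y, d x y = d y x) /\
  (forall x y z, d x y <= Rmax (d x z) (d z y)).

Definition is_ultrametric {X : Type} (d : X -> X -> R) : Prop :=
  is_pseudoultrametric d /\ (forall x y, d x y = 0 -> x = y).

(* f : [0,oo) -> [0,oo) is represented by f : R -> R with
   f mapping [0,oo) into [0,oo); only its values on [0,oo) are relevant. *)
Definition maps_nonneg (f : R -> R) : Prop := forall x, 0 <= x -> 0 <= f x.

Definition pseudoultrametric_preserving (f : R -> R) : Prop :=
  forall (X : Type) (d : X -> X -> R),
    is_pseudoultrametric d -> is_pseudoultrametric (fun x y => f (d x y)).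

Definition ultrametric_pseudoultrametric_preserving (f : R -> R) : Prop :=
  forall (X : Type) (d : X -> X -> R),
    is_ultrametric d -> is_pseudoultrametric (fun x y => f (d x y)).

Definition increasing_nonneg (f : R -> R) : Prop :=
  forall a b, 0 <= b -> b <= a -> f b <= f a.

(* Main.v *)
Require Import Defs.
From Stdlib Require Import Reals Lra.
Open Scope R_scope.

Inductive three := P0 | P1 | P2.

Definition d3 (a b : R) (x y : three) : R :=
  match x, y with
  | P0, P0 | P1, P1 | P2, P2 => 0
  | P0, P1 | P1, P0 => b
  | _, _ => a
  end.

Lemma d3_ultra a b : 0 < b -> b <= a -> is_ultrametric (d3 a b).
Proof.
  intros Hb Hab. repeat split.
  - intros [] []; simpl; lra.
  - intros []; reflexivity.
  - intros [] []; reflexivity.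
  - intros [] [] []; simpl; unfold Rmax; destruct Rle_dec; lra.
  - intros [] [] H; simpl in H; try reflexivity; lra.
Qed.

Theorem proposition2p4 (f : R -> R) (hf : maps_nonneg f) :
  (increasing_nonneg f /\ f 0 = 0 <-> pseudoultrametric_preserving f) /\
  (pseudoultrametric_preserving f <-> ultrametric_pseudoultrametric_preserving f).
Proof.
  assert (H12 : increasing_nonneg f /\ f 0 = 0 -> pseudoultrametric_preserving f).
  { intros [Hi H0] X d (Hn & Hz & Hs & Ht). repeat split.
    - intros x y; apply hf, Hn.
    - intros x; simpl; rewrite Hz; exact H0.
    - intros x y; simpl; rewrite Hs; reflexivity.
    - intros x y z; simpl. specialize (Ht x y z).
      unfold Rmax in *. destruct (Rle_dec (d x z) (d z y)).
      + apply Rle_trans with (f (d z y)); [apply Hi; auto|].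
        destruct Rle_dec; lra.
      + apply Rle_trans with (f (d x z)); [apply Hi; auto|].
        destruct Rle_dec; lra. }
  assert (H23 : pseudoultrametric_preserving f -> ultrametric_pseudoultrametric_preserving f).
  { intros P X d [Hd _]. apply P, Hd. }
  assert (H31 : ultrametric_pseudoultrametric_preserving f -> increasing_nonneg f /\ f 0 = 0).
  { intros U.
    assert (H0 : f 0 = 0).
    { assert (Hu : is_ultrametric (fun _ _ : unit => 0)).
      { repeat split; intros; try lra. unfold Rmax; destruct Rle_dec; lra.
        destruct x, y; reflexivity. }
      destruct (U unit _ Hu) as (_ & Hz & _). exact (Hz tt). }
    split; [|exact H0].
    intros a b Hb Hba. destruct (Req_dec b 0) as [->|Hb0].
    - rewrite H0; apply hf; lra.
    - destruct (U three _ (d3_ultra a b ltac:(lra) Hba)) as (_ & _ & _ & Ht).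
      specialize (Ht P0 P1 P2). simpl in Ht.
      unfold Rmax in Ht; destruct Rle_dec; lra. }
  tauto.
Qed.
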